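(* Let $F$ be the free group on the totally ordered set $X=\{x_1<\dots<x_m\}$, and let $n\ge1$, $c\ge1$ with $c\ge n-1$. Let $$W=\{[b,a]:\ b,a \text{ basic commutators on } X,\ b>a,\ wt(b)\ge c+n+1,\ wt(a)\ge c+1,\ wt(b)+wt(a)\le 2c+2n+1\}.$$ Then $$[\gamma_{c+n+1}(F),\gamma_{c+1}(F)]\,\gamma_{2c+2n+2}(F)=\langle W\rangle\,\gamma_{2c+2n+2}(F),$$ i.e. $[\gamma_{c+n+1}(F),\gamma_{c+1}(F)]\equiv\langle W\rangle \pmod{\gamma_{2c+2n+2}(F)}$.
   Context: $\gamma_k(F)$ is the $k$-th term of the lower central series of $F$. Basic commutators on a totally ordered set $X$ of free generators are defined inductively with their weights $wt$: the elements of $X$ are the basic commutators of weight 1, ordered as in $X$. Assuming basic commutators of weight $<k$ have been defined and ordered, a commutator $[b,a]$ is a basic commutator of weight $k$ if $b,a$ are basic commutators with $wt(a)+wt(b)=k$, $b>a$, and, if $b=[b_1,b_2]$ (with $b_1,b_2$ basic), then $b_2\le a$. The ordering is then extended to weight $k$ so that all basic commutators of smaller weight precede those of weight $k$. *)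

(* Defs.v *)
(* The free group F on X = {x_0 < ... < x_(m-1)}
   (indexed by 'I_m with its natural order) is modelled concretely by freely
   reduced words; subsets of F are Prop-valued predicates on words. *)
From mathcomp Require Import all_boot.
Set Implicit Arguments. Unset Strict Implicit. Unset Printing Implicit Defensive.

Section FreeGroup.
Variable m : nat.

(* a letter (i, false) is x_i, (i, true) is x_i^-1 *)
Definition letter := ('I_m * bool)%type.
Definition word := seq letter.

Definition push (l : letter) (w : word) : word :=
  match w with
  | l' :: w' => if (l'.1 == l.1) && (l'.2 != l.2) then w' else l :: w
  | [::] => [:: l]
  end.

Definition reduce (w : word) : word := foldr push [::] w.

Definition fg1 : word := [::].
Definition fgmul (u v : word) : word := reduce (u ++ v).
Definition fginv (u : word) : word := rev (map (fun l : letter => (l.1, ~~ l.2)) u).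
Definition fggen (i : 'I_m) : word := [:: (i, false)].
Definition fgcomm (a b : word) : word :=
  fgmul (fgmul (fginv a) (fginv b)) (fgmul a b).

Definition fgset := word -> Prop.
Definition fgset_eq (A B : fgset) : Prop := forall w, A w <-> B w.

Inductive fgspan (S : fgset) : fgset :=
| span1 : fgspan S fg1
| spanS s : S s -> fgspan S (reduce s)
| spanV u : fgspan S u -> fgspan S (fginv u)
| spanM u v : fgspan S u -> fgspan S v -> fgspan S (fgmul u v).

Definition Ftot : fgset := fgspan (fun _ => True).

Definition fgsetmul (A B : fgset) : fgset :=
  fun w => exists a b, [/\ A a, B b & w = fgmul a b].

Definition fgcommg (A B : fgset) : fgset :=
  fgspan (fun w => exists a b, [/\ A a, B b & w = fgcomm a b]).

(* lower central series: gamma_1 = F, gamma_(k+1) = [gamma_k, F]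
   (gamma_0 := F by convention, unused) *)
Fixpoint gamma (k : nat) : fgset :=
  match k with
  | 0 => Ftot
  | 1 => Ftot
  | k'.+1 => fgcommg (gamma k') Ftot
  end.

(* formal commutators on X: Node b a stands for [b, a] *)
Inductive ctree : Type :=
| Leaf of 'I_m
| Node of ctree & ctree.

Fixpoint wt (t : ctree) : nat :=
  match t with Leaf _ => 1 | Node b a => wt b + wt a end.

Fixpoint ceval (t : ctree) : word :=
  match t with Leaf i => fggen i | Node b a => fgcomm (ceval b) (ceval a) end.

Fixpoint basic (lt : ctree -> ctree -> Prop) (t : ctree) : Prop :=
  match t with
  | Leaf _ => True
  | Node b a =>
      [/\ basic lt b, basic lt a, lt a b &
          match b with Leaf _ => True | Node _ b2 => b2 = a \/ lt b2 a end]
  end.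

(* [lt] is an admissible ordering of the basic commutators: a strict total
   order on basic commutators, extending the order of X on weight 1, and in
   which commutators of smaller weight precede those of larger weight.
   (The order among basic commutators of equal weight > 1 is arbitrary.) *)
Definition basic_order (lt : ctree -> ctree -> Prop) : Prop :=
  [/\ (forall i j : 'I_m, lt (Leaf i) (Leaf j) <-> (i < j)%N),
      (forall t, basic lt t -> ~ lt t t),
      (forall t u v, basic lt t -> basic lt u -> basic lt v ->
          lt t u -> lt u v -> lt t v),
      (forall t u, basic lt t -> basic lt u -> t = u \/ lt t u \/ lt u t) &
      (forall t u, basic lt t -> basic lt u -> (wt t < wt u)%N -> lt t u)].

Definition Wset (lt : ctree -> ctree -> Prop) (c n : nat) : fgset :=
  fun w => exists b a,
    [/\ basic lt b, basic lt a & lt a b] /\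
    [/\ (c + n + 1 <= wt b)%N, (c + 1 <= wt a)%N,
        (wt b + wt a <= 2 * c + 2 * n + 1)%N &
        w = ceval (Node b a)].

End FreeGroup.

(* Main.v *)
From HB Require Import structures.
Require Import Defs.
From mathcomp Require Import all_boot.
From Stdlib Require Import Lia ClassicalEpsilon.
Set Implicit Arguments. Unset Strict Implicit. Unset Printing Implicit Defensive.
Ltac nlia := repeat match goal with
 | H : is_true (leq _ _) |- _ => move/leP: H => H
 | |- is_true (leq _ _) => apply/leP
 end; unfold addn, subn, muln, addn_rec, subn_rec, muln_rec in *; lia.

Section CtreeEq.
Variable m : nat.
Fixpoint ct_eqb (t u : ctree m) : bool :=
  match t, u with
  | Leaf i, Leaf j => i == j
  | Node a b, Node c d => ct_eqb a c && ct_eqb b d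
  | _, _ => false end.
Lemma ct_eqP : Equality.axiom ct_eqb.
Proof.
elim=> [i|a IHa b IHb] [j|c d] /=; try by constructor.
  by apply: (iffP eqP) => [->|[]].
apply: (iffP andP) => [[H1 H2]|[H1 H2]].
  by move/IHa: H1 => ->; move/IHb: H2 => ->.
by split; [apply/IHa | apply/IHb].
Qed.
End CtreeEq.
HB.instance Definition _ m := hasDecEq.Build (ctree m) (@ct_eqP m).

Section Trees.
Variable m : nat.
Fixpoint trees n : seq (ctree m) :=
  match n with 0 => [::]
  | n'.+1 => [seq Leaf i | i <- enum 'I_m] ++ [seq Node a b | a <- trees n', b <- trees n'] end.
Lemma wt_pos' (t : ctree m) : 1 <= wt t.
Proof. by elim: t => //= a IHa b _; exact: leq_trans IHa (leq_addr _ _). Qed.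
Lemma trees_mem n (t : ctree m) : wt t <= n -> t \in trees n.
Proof.
elim: n t => [|n IH] t; first by rewrite leqNgt wt_pos'.
case: t => [i|a b] /= Hw; rewrite mem_cat; apply/orP.
  by left; apply: map_f; rewrite mem_enum.
right; apply: allpairs_f; apply: IH.
  by have := wt_pos' b; move=> ?; nlia.
by have := wt_pos' a; move=> ?; nlia.
Qed.
End Trees.

Definition pdec (P : Prop) : bool := if excluded_middle_informative P then true else false.
Lemma pdecP P : reflect P (pdec P).
Proof. by rewrite /pdec; case: excluded_middle_informative => H; constructor. Qed.

Lemma count_strict (X : eqType) (p q : pred X) (l : seq X) x :
  x \in l -> q x -> ~~ p x -> (forall y, p y -> q y) -> count p l < count q l.
Proof.
move=> xl qx npx pq; elim: l xl => [//|y l IH] /=; rewrite in_cons => /orP [/eqP <-|xl].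
  rewrite qx (negbTE npx) add0n add1n ltnS; exact: sub_count.
rewrite -addnS; apply: leq_add; last exact: IH.
by case py: (p y) => //; rewrite (pq _ py).
Qed.

Section WF.
Variable m : nat.
Variable lt : ctree m -> ctree m -> Prop.
Hypothesis Hlt : basic_order lt.
Lemma basic_wf w (P : ctree m -> Prop) :
 (forall s, basic lt s -> wt s < w ->
     (forall s', basic lt s' -> wt s' < w -> lt s s' -> P s') -> P s) ->
 forall s, basic lt s -> wt s < w -> P s.
Proof.
move=> IH.
pose cnt s := count (fun u => pdec (basic lt u /\ lt s u)) (trees m w).
suff H : forall k s, cnt s < k -> basic lt s -> wt s < w -> P s.
  by move=> s; apply: (H (cnt s).+1).
elim=> [//|k IHk] s Hk bs ws; apply: IH => // s' bs' ws' lss'.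
apply: IHk => //; rewrite -ltnS; apply: leq_trans Hk; rewrite ltnS.
case: Hlt => _ Hirr Htr _ _.
apply: (@count_strict _ _ _ _ s').
- by apply: trees_mem; exact: ltnW.
- by apply/pdecP.
- by apply/pdecP => -[_ /(Hirr _ bs')].
- by move=> y /pdecP [By Hy]; apply/pdecP; split => //; exact: (Htr s s' y).
Qed.
End WF.
Section Grp.
Variable T : Type.
Variables (mul : T -> T -> T) (inv : T -> T) (one : T).
Hypothesis mulA : forall x y z, mul x (mul y z) = mul (mul x y) z.
Hypothesis mul1g : forall x, mul one x = x.
Hypothesis mulg1 : forall x, mul x one = x.
Hypothesis mulVg : forall x, mul (inv x) x = one.
Hypothesis mulgV : forall x, mul x (inv x) = one.

Local Infix "*g" := mul (at level 40, left associativity).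

Lemma mulKg x y : inv x *g (x *g y) = y.
Proof. by rewrite mulA mulVg mul1g. Qed.
Lemma mulKVg x y : x *g (inv x *g y) = y.
Proof. by rewrite mulA mulgV mul1g. Qed.
Lemma invK x : inv (inv x) = x.
Proof. by rewrite -[LHS]mulg1 -(mulVg x) mulA mulVg mul1g. Qed.
Lemma invM x y : inv (x *g y) = inv y *g inv x.
Proof.
have H : (x *g y) *g (inv y *g inv x) = one.
  by rewrite -mulA mulKVg mulgV.
by rewrite -[LHS]mulg1 -H mulKg.
Qed.
Lemma inv1 : inv one = one.
Proof. by rewrite -[LHS]mul1g mulgV. Qed.

(* reflexive identity checker *)
Definition lev (e : seq T) (l : nat * bool) :=
  let x := nth one e l.1 in if l.2 then inv x else x.
Fixpoint wev e (w : seq (nat * bool)) :=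
  match w with [::] => one | l :: w' => lev e l *g wev e w' end.
Definition pushR (l : nat * bool) w :=
  match w with
  | l' :: w' => if (l'.1 == l.1) && (l'.2 != l.2) then w' else l :: w
  | [::] => [:: l] end.
Fixpoint redR w := match w with [::] => [::] | l :: w' => pushR l (redR w') end.

Lemma wev_push e l w : wev e (pushR l w) = wev e (l :: w).
Proof.
case: w => [|[i b] w] //=; case: l => j c /=.
case: eqP => [->|] //=; case: b c => [] [] //=; rewrite /lev /= mulA ?mulgV ?mulVg mul1g //.
Qed.
Lemma wev_red e w : wev e (redR w) = wev e w.
Proof. by elim: w => //= l w IH; rewrite wev_push /= IH. Qed.
Lemma wev_cat e u v : wev e (u ++ v) = wev e u *g wev e v.
Proof. by elim: u => [|l u IH] /=; rewrite ?mul1g // IH mulA. Qed.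
Lemma wev_rinv e w :
  wev e (rev (map (fun l => (l.1, ~~ l.2)) w)) = inv (wev e w).
Proof.
elim: w => [|l w IH] /=; first by rewrite inv1.
rewrite rev_cons -cats1 wev_cat IH /= mulg1 invM; congr (_ *g _).
by rewrite /lev /=; case: l.2 => //; rewrite invK.
Qed.

Inductive gterm := TV of nat | TM of gterm & gterm | TI of gterm | T1.
Fixpoint interp e t := match t with
  | TV i => nth one e i | TM a b => interp e a *g interp e b
  | TI a => inv (interp e a) | T1 => one end.
Fixpoint tw t : seq (nat * bool) := match t with
  | TV i => [:: (i, false)] | TM a b => tw a ++ tw b
  | TI a => rev (map (fun l => (l.1, ~~ l.2)) (tw a)) | T1 => [::] end.
Lemma wev_tw e t : wev e (tw t) = interp e t.
Proof.
elim: t => [i|a IHa b IHb|a IHa|] /=; rewrite ?mulg1 //.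
  by rewrite wev_cat IHa IHb.
by rewrite wev_rinv IHa.
Qed.
Lemma gid e t1 t2 : redR (tw t1) == redR (tw t2) -> interp e t1 = interp e t2.
Proof. by move/eqP=> H; rewrite -!wev_tw -wev_red H wev_red. Qed.

Definition conj x g := inv g *g x *g g.
Definition comm x y := (inv x *g inv y) *g (x *g y).
Definition Tcomm a b := TM (TM (TI a) (TI b)) (TM a b).
Definition Tconj a g := TM (TM (TI g) a) g.

Lemma hall_witt x y z :
  comm (comm x y) (conj z x) *g comm (comm z x) (conj y z) *g comm (comm y z) (conj x y) = one.
Proof.
exact: (@gid [:: x; y; z]
  (TM (TM (Tcomm (Tcomm (TV 0) (TV 1)) (Tconj (TV 2) (TV 0)))
          (Tcomm (Tcomm (TV 2) (TV 0)) (Tconj (TV 1) (TV 2))))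
      (Tcomm (Tcomm (TV 1) (TV 2)) (Tconj (TV 0) (TV 1)))) T1 (erefl true)).
Qed.

Lemma comm_mull x y z : comm (x *g y) z = conj (comm x z) y *g comm y z.
Proof. exact: (@gid [:: x; y; z] (Tcomm (TM (TV 0) (TV 1)) (TV 2))
  (TM (Tconj (Tcomm (TV 0) (TV 2)) (TV 1)) (Tcomm (TV 1) (TV 2))) (erefl true)). Qed.
Lemma comm_mulr x y z : comm x (y *g z) = comm x z *g conj (comm x y) z.
Proof. exact: (@gid [:: x; y; z] (Tcomm (TV 0) (TM (TV 1) (TV 2)))
  (TM (Tcomm (TV 0) (TV 2)) (Tconj (Tcomm (TV 0) (TV 1)) (TV 2))) (erefl true)). Qed.
Lemma comm_invl x y : comm (inv x) y = inv (conj (comm x y) (inv x)).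
Proof. exact: (@gid [:: x; y] (Tcomm (TI (TV 0)) (TV 1))
  (TI (Tconj (Tcomm (TV 0) (TV 1)) (TI (TV 0)))) (erefl true)). Qed.
Lemma comm_invr x y : comm x (inv y) = inv (conj (comm x y) (inv y)).
Proof. exact: (@gid [:: x; y] (Tcomm (TV 0) (TI (TV 1)))
  (TI (Tconj (Tcomm (TV 0) (TV 1)) (TI (TV 1)))) (erefl true)). Qed.
Lemma conjE x g : conj x g = x *g comm x g.
Proof. exact: (@gid [:: x; g] (Tconj (TV 0) (TV 1))
  (TM (TV 0) (Tcomm (TV 0) (TV 1))) (erefl true)). Qed.
Lemma commC x y : comm y x = inv (comm x y).
Proof. exact: (@gid [:: x; y] (Tcomm (TV 1) (TV 0))
  (TI (Tcomm (TV 0) (TV 1))) (erefl true)). Qed.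
Lemma comm1l y : comm one y = one.
Proof. exact: (@gid [:: y] (Tcomm T1 (TV 0)) T1 (erefl true)). Qed.
Lemma comm1r y : comm y one = one.
Proof. exact: (@gid [:: y] (Tcomm (TV 0) T1) T1 (erefl true)). Qed.
Lemma commxx y : comm y y = one.
Proof. exact: (@gid [:: y] (Tcomm (TV 0) (TV 0)) T1 (erefl true)). Qed.
Lemma conj_comm x y g : conj (comm x y) g = comm (conj x g) (conj y g).
Proof. exact: (@gid [:: x; y; g] (Tconj (Tcomm (TV 0) (TV 1)) (TV 2))
  (Tcomm (Tconj (TV 0) (TV 2)) (Tconj (TV 1) (TV 2))) (erefl true)). Qed.
Lemma conjM x y g : conj (x *g y) g = conj x g *g conj y g.
Proof. exact: (@gid [:: x; y; g] (Tconj (TM (TV 0) (TV 1)) (TV 2))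
  (TM (Tconj (TV 0) (TV 2)) (Tconj (TV 1) (TV 2))) (erefl true)). Qed.
Lemma conjV x g : conj (inv x) g = inv (conj x g).
Proof. exact: (@gid [:: x; g] (Tconj (TI (TV 0)) (TV 1))
  (TI (Tconj (TV 0) (TV 1))) (erefl true)). Qed.
Lemma conj1 g : conj one g = one.
Proof. exact: (@gid [:: g] (Tconj T1 (TV 0)) T1 (erefl true)). Qed.
Lemma conjK x g : conj (conj x (inv g)) g = x.
Proof. exact: (@gid [:: x; g] (Tconj (Tconj (TV 0) (TI (TV 1))) (TV 1))
  (TV 0) (erefl true)). Qed.
Lemma comm_err u z g : inv (comm u z) *g comm u (conj z g) =
  conj (comm u (comm z g)) (comm u z) *g comm (comm u z) (comm z g).
Proof. exact: (@gid [:: u; z; g]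
  (TM (TI (Tcomm (TV 0) (TV 1))) (Tcomm (TV 0) (Tconj (TV 1) (TV 2))))
  (TM (Tconj (Tcomm (TV 0) (Tcomm (TV 1) (TV 2))) (Tcomm (TV 0) (TV 1)))
      (Tcomm (Tcomm (TV 0) (TV 1)) (Tcomm (TV 1) (TV 2)))) (erefl true)). Qed.

Definition gset := T -> Prop.
Definition subs (A B : gset) := forall x, A x -> B x.
Inductive Span (S : gset) : gset :=
| Sp1 : Span S one
| SpS s : S s -> Span S s
| SpV u : Span S u -> Span S (inv u)
| SpM u v : Span S u -> Span S v -> Span S (u *g v).
Definition Sgrp (H : gset) :=
  [/\ H one, (forall x, H x -> H (inv x)) & forall x y, H x -> H y -> H (x *g y)].
Definition Norm (H : gset) := forall x g, H x -> H (conj x g).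
Definition Commg (A B : gset) : gset :=
  Span (fun w => exists a b, [/\ A a, B b & w = comm a b]).
Definition Top : gset := fun _ => True.
Fixpoint Gam (k : nat) : gset :=
  match k with 0 => Top | 1 => Top | k'.+1 => Commg (Gam k') Top end.

Lemma Span_grp S : Sgrp (Span S).
Proof. by split; [exact: Sp1| exact: SpV| exact: SpM]. Qed.
Lemma Span_min S H : Sgrp H -> subs S H -> subs (Span S) H.
Proof. by case=> H1 HV HM sSH x; elim=> //; auto. Qed.
Lemma Span_mono S S' : subs S S' -> subs (Span S) (Span S').
Proof. by move=> sS; apply: Span_min; [exact: Span_grp| move=> x /sS; exact: SpS]. Qed.
Lemma Span_conj S : (forall x g, S x -> S (conj x g)) -> Norm (Span S).
Proof.
move=> HS x g; elim.
- by rewrite conj1; exact: Sp1.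
- by move=> s /HS Hs; exact: SpS.
- by move=> u _ Hu; rewrite conjV; exact: SpV.
- by move=> u v _ Hu _ Hv; rewrite conjM; exact: SpM.
Qed.
Lemma Top_grp : Sgrp Top. Proof. by []. Qed.

Section SubgroupFacts.
Variable H : gset.
Hypothesis HH : Sgrp H.
Lemma g1 : H one. Proof. by case: HH. Qed.
Lemma gV x : H x -> H (inv x). Proof. by case: HH => _ HV _; exact: HV. Qed.
Lemma gM x y : H x -> H y -> H (x *g y). Proof. by case: HH => _ _ HM; exact: HM. Qed.
Lemma gVr x : H (inv x) -> H x. Proof. by move/gV; rewrite invK. Qed.
Lemma gMl x y : H x -> H (x *g y) -> H y.
Proof. by move=> Hx Hxy; rewrite -(mulKg x y); apply: gM => //; exact: gV. Qed.
Lemma gMr x y : H y -> H (x *g y) -> H x.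
Proof. by move=> Hy Hxy; rewrite -(mulg1 x) -(mulgV y) mulA; apply: gM => //; exact: gV. Qed.
End SubgroupFacts.

Lemma comm_span (S U H : gset) : Sgrp H ->
  (forall s t, S s -> U t -> H (comm s t)) ->
  (forall g h z, Span S g -> Span U h -> (Span S z \/ Span U z) ->
      H (comm g h) -> H (conj (comm g h) z)) ->
  forall g h, Span S g -> Span U h -> H (comm g h).
Proof.
move=> HH Hgen Hconj.
have step1 : forall g t, Span S g -> U t -> H (comm g t).
  move=> g t Hg Ht; elim: Hg => [|s Hs|u Hu IH|u v Hu IHu Hv IHv].
  - by rewrite comm1l; exact: g1.
  - exact: Hgen.
  - rewrite comm_invl; apply: gV => //; apply: Hconj => //; first exact: SpS.
    by left; exact: SpV.
  - rewrite comm_mull; apply: gM => //; apply: Hconj => //; first exact: SpS.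
    by left.
move=> g h Hg; elim => [|t Ht|u Hu IH|u v Hu IHu Hv IHv].
- by rewrite comm1r; exact: g1.
- exact: step1.
- rewrite comm_invr; apply: gV => //; apply: Hconj => //.
  by right; exact: SpV.
- rewrite comm_mulr; apply: gM => //; apply: Hconj => //.
  by right.
Qed.

Lemma comm_span_norm (S U H : gset) : Sgrp H -> Norm H ->
  (forall s t, S s -> U t -> H (comm s t)) ->
  forall g h, Span S g -> Span U h -> H (comm g h).
Proof. by move=> HH HN Hgen; apply: comm_span => // g h z _ _ _; exact: HN. Qed.

Lemma Commg_sub (A B H : gset) : Sgrp H ->
  (forall a b, A a -> B b -> H (comm a b)) -> subs (Commg A B) H.
Proof. by move=> HH Hg; apply: Span_min => // w [a [b [Ha Hb ->]]]; exact: Hg. Qed.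

Lemma Commg_norm (A B : gset) : Norm A -> Norm B -> Norm (Commg A B).
Proof.
move=> NA NB; apply: Span_conj => x g [a [b [Ha Hb ->]]].
by exists (conj a g), (conj b g); split; [exact: NA| exact: NB| exact: conj_comm].
Qed.

Lemma three_sub (A B C N : gset) : Sgrp N -> Norm N -> Norm A -> Norm B -> Norm C ->
  (forall a b c, A a -> B b -> C c -> N (comm (comm a b) c)) ->
  (forall a b c, A a -> B b -> C c -> N (comm (comm b c) a)) ->
  forall a b c, A a -> B b -> C c -> N (comm (comm c a) b).
Proof.
move=> HN NN NA NB NC H1 H2 a b c Ha Hb Hc.
have := hall_witt c a (conj b (inv c)); rewrite conjK -mulA => E.
have e2 : N (comm (comm (conj b (inv c)) c) (conj a (conj b (inv c)))).
  by apply: H2 => //; [exact: NA| exact: NB].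
have e3 : N (comm (comm a (conj b (inv c))) (conj c a)).
  by apply: H1 => //; [exact: NB| exact: NC].
apply: (gMr HN (gM HN e2 e3)); rewrite E; exact: g1.
Qed.

Lemma Gam_norm k : Norm (Gam k).
Proof.
elim: k => [|[|k] IH] //; apply: Commg_norm => //.
Qed.
Lemma Gam_grp k : Sgrp (Gam k).
Proof. by case: k => [|[|k]] //; exact: Span_grp. Qed.
Lemma Gam_comm k a b : 1 <= k -> Gam k a -> Gam k.+1 (comm a b).
Proof. by case: k => [|k] // _ Ha; apply: SpS; exists a, b. Qed.
Lemma Gam_S k : subs (Gam k.+1) (Gam k).
Proof.
case: k => [|k] //; apply: Commg_sub; first exact: Gam_grp.
move=> a b Ha _; rewrite /comm -mulA (mulA (inv b)).
apply: gM; [exact: Gam_grp| by apply: gV => //; exact: Gam_grp|].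
exact: Gam_norm.
Qed.
Lemma Gam_mono i j : i <= j -> subs (Gam j) (Gam i).
Proof.
elim: j => [|j IH]; first by rewrite leqn0 => /eqP ->.
rewrite leq_eqVlt => /orP [/eqP -> //| Hij] x /Gam_S; exact: IH.
Qed.

Lemma Gam_commg i j : 1 <= i -> 1 <= j ->
  forall a b, Gam i a -> Gam j b -> Gam (i + j) (comm a b).
Proof.
move=> + Hj; elim: j Hj i => [//|[|j] IH] _ i Hi a b Ha Hb.
  by rewrite addn1; exact: Gam_comm.
have HG := Gam_grp (i + j.+2).
apply: (comm_span_norm HG (@Gam_norm _) (S := Gam i) (U := fun w => exists a b,
  [/\ Gam j.+1 a, Top b & w = comm a b])); [|exact: SpS|exact: Hb].
move=> a' w Ha' [b' [t [Hb' _ ->]]].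
rewrite -(invK (comm _ _)) -commC; apply: gV => //.
apply: (three_sub (A := Top) (B := Gam i) (C := Gam j.+1)) => //.
- exact: Gam_norm.
- exact: Gam_norm.
- exact: Gam_norm.
- move=> a0 b0 c0 _ Hb0 Hc0.
  have -> : i + j.+2 = i.+1 + j.+1 by rewrite addnS addSn.
  apply: IH => //.
  rewrite (commC b0 a0); apply: gV; first exact: Gam_grp.
  exact: Gam_comm.
- move=> a0 b0 c0 _ Hb0 Hc0.
  have -> : i + j.+2 = (i + j.+1).+1 by rewrite addnS.
  apply: Gam_comm; first by rewrite addnS.
  exact: IH.
Qed.

Lemma wt_pos m (t : ctree m) : 1 <= wt t.
Proof. by elim: t => //= a IHa b _; exact: leq_trans IHa (leq_addr _ _). Qed.

Section Hall.
Variable m : nat.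
Variable gen : 'I_m -> T.
Hypothesis gen_all : forall g, Span (fun x => exists i, x = gen i) g.
Variable lt : ctree m -> ctree m -> Prop.
Hypothesis Hlt : basic_order lt.

Fixpoint cev (t : ctree m) : T :=
  match t with Leaf i => gen i | Node b a => comm (cev b) (cev a) end.

Lemma cev_gam t : Gam (wt t) (cev t).
Proof.
elim: t => [i|b IHb a IHa] //=; apply: Gam_commg => //; exact: wt_pos.
Qed.

Lemma lt_irr t : basic lt t -> ~ lt t t. Proof. by case: Hlt => _ H _ _ _; exact: H. Qed.
Lemma lt_trans t u v : basic lt t -> basic lt u -> basic lt v -> lt t u -> lt u v -> lt t v.
Proof. by case: Hlt => _ _ H _ _; exact: H. Qed.
Lemma lt_total t u : basic lt t -> basic lt u -> t = u \/ lt t u \/ lt u t.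
Proof. by case: Hlt => _ _ _ H _; exact: H. Qed.
Lemma lt_wt_lt t u : basic lt t -> basic lt u -> wt t < wt u -> lt t u.
Proof. by case: Hlt => _ _ _ _ H; exact: H. Qed.
Lemma lt_wt t u : basic lt t -> basic lt u -> lt t u -> wt t <= wt u.
Proof.
move=> bt bu ltu; rewrite leqNgt; apply/negP => /(lt_wt_lt bu bt) ltut.
exact: (lt_irr bt (lt_trans bt bu bt ltu ltut)).
Qed.

Definition Bas k : gset := fun x => exists t, [/\ basic lt t, wt t = k & x = cev t].
Definition Mk k : gset := Span (fun x => Bas k x \/ Gam k.+1 x).

Lemma Mk_grp k : Sgrp (Mk k). Proof. exact: Span_grp. Qed.
Lemma Mk_gam k : 1 <= k -> subs (Mk k) (Gam k).
Proof.
move=> k1; apply: Span_min; first exact: Gam_grp.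
move=> x [[t [_ <- ->]]|]; first exact: cev_gam.
exact: Gam_S.
Qed.
Lemma Gam_Mk k : subs (Gam k.+1) (Mk k).
Proof. by move=> x Hx; apply: SpS; right. Qed.
Lemma Mk_norm k : 1 <= k -> Norm (Mk k).
Proof.
move=> k1 x g Hx; rewrite conjE; apply: gM; [exact: Mk_grp| exact: Hx|].
apply: Gam_Mk; apply: Gam_comm => //; exact: Mk_gam.
Qed.

Lemma err_gam a b u z g : 1 <= a -> 1 <= b -> Gam a u -> Gam b z ->
  Gam (a + b).+1 (inv (comm u z) *g comm u (conj z g)).
Proof.
move=> a1 b1 Hu Hz; rewrite comm_err.
have Hzg : Gam b.+1 (comm z g) by exact: Gam_comm.
apply: gM; first exact: Gam_grp.
  apply: Gam_norm; rewrite -addnS; exact: Gam_commg.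
apply: (@Gam_mono _ (a + b + b.+1)); first by nlia.
apply: Gam_commg => //; first by nlia.
exact: Gam_commg.
Qed.


Lemma bas_node t s : basic lt (Node t s) -> Mk (wt t + wt s) (comm (cev t) (cev s)).
Proof. by move=> b; apply: SpS; left; exists (Node t s). Qed.

Lemma lift_M w' w y q g : 1 <= w' -> 1 <= q -> w' + q = w -> Gam q y ->
  (forall d, Bas w' d -> Mk w (comm d y)) -> Mk w' g -> Mk w (comm g y).
Proof.
move=> w1 q1 Hw Hy Hd Hg.
have w1' : 1 <= w by rewrite -Hw; nlia.
apply: (comm_span_norm (Mk_grp w) (Mk_norm w1')
  (S := fun x => Bas w' x \/ Gam w'.+1 x) (U := fun x => x = y)) => //; last exact: SpS.
move=> s t [Hs|Hs] ->; first exact: Hd.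
apply: Gam_Mk; rewrite -Hw -addSn; apply: Gam_commg => //.
Qed.

Lemma LL w : forall t s, basic lt t -> basic lt s -> wt t + wt s = w ->
  Mk w (comm (cev t) (cev s)).
Proof.
elim/ltn_ind: w => w IHw.
have C : forall s, basic lt s -> wt s < w -> forall t, basic lt t -> lt s t ->
    wt t + wt s = w -> Mk w (comm (cev t) (cev s)).
  apply: (basic_wf Hlt) => s bs ws IHs t bt lst Hw.
  case: t bt lst Hw => [i|t1 t2] bt lst Hw.
    by rewrite -Hw; apply: bas_node; split.
  case: (bt) => b1 b2 l21 hb.
  case: (lt_total b2 bs) => [e|[l2s|ls2]].
  - by rewrite -Hw; apply: bas_node; split => //; left.
  - by rewrite -Hw; apply: bas_node; split => //; right.
  move: Hw => /= Hw.
  set x := cev t1; set y := cev t2; set z := cev s.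
  have pq : wt t2 <= wt t1 := lt_wt b2 b1 l21.
  have p1 := wt_pos t1; have q1 := wt_pos t2; have r1 := wt_pos s.
  have w1 : 1 <= w by nlia.
  have HA : Mk w (comm (comm x z) y).
    apply: (@lift_M (wt t1 + wt s) w y (wt t2)) => //; try nlia.
    - exact: cev_gam.
    - move=> d [u [bu wu ->]]; apply: (IHs t2) => //; try nlia.
      by apply: lt_wt_lt => //; nlia.
    - by apply: IHw => //; nlia.
  have HB : Mk w (comm (comm y z) x).
    apply: (@lift_M (wt t2 + wt s) w x (wt t1)) => //; try nlia.
    - exact: cev_gam.
    - move=> d [u [bu wu ->]].
      case: (lt_total bu b1) => [->|[lu1|l1u]].
      + by rewrite commxx; exact: g1 (Mk_grp w).
      + rewrite (commC (cev t1) (cev u)); apply: gV; first exact: Mk_grp.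
        apply: (IHs u) => //; try nlia.
        by apply: lt_wt_lt => //; nlia.
      + apply: (IHs t1) => //; try nlia.
        exact: (lt_trans bs b2 b1).
    - by apply: IHw => //; nlia.
  have MG := Mk_grp w.
  have E := hall_witt x y z; rewrite -mulA in E.
  have e1 : Mk w (inv (comm (comm x y) z) *g comm (comm x y) (conj z x)).
    apply: Gam_Mk; have -> : w = wt t1 + wt t2 + wt s by [].
    apply: err_gam => //; try nlia; last exact: cev_gam.
    exact: (cev_gam (Node t1 t2)).
  have e2 : Mk w (inv (comm (comm z x) y) *g comm (comm z x) (conj y z)).
    apply: Gam_Mk; have -> : w = wt s + wt t1 + wt t2 by nlia.
    apply: err_gam => //; try nlia; last exact: cev_gam.
    by apply: Gam_commg; try exact: cev_gam.
  have e3 : Mk w (inv (comm (comm y z) x) *g comm (comm y z) (conj x y)).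
    apply: Gam_Mk; have -> : w = wt t2 + wt s + wt t1 by nlia.
    apply: err_gam => //; try nlia; last exact: cev_gam.
    by apply: Gam_commg; try exact: cev_gam.
  have M2 : Mk w (comm (comm z x) y).
    rewrite (commC x z) comm_invl; apply: gV => //; exact: Mk_norm.
  have E2 : Mk w (comm (comm z x) (conj y z)).
    by rewrite -(mulKVg (comm (comm z x) y) (comm _ (conj y z))); exact: gM.
  have E3 : Mk w (comm (comm y z) (conj x y)).
    by rewrite -(mulKVg (comm (comm y z) x) (comm _ (conj x y))); exact: gM.
  have E1 : Mk w (comm (comm x y) (conj z x)).
    apply: (gMr MG (gM MG E2 E3)); rewrite E; exact: g1.
  apply: (gVr MG); exact: (gMr MG E1 e1).
move=> t s bt bs Hw.
case: (lt_total bt bs) => [->|[lts|lst]].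
- by rewrite commxx; exact: g1 (Mk_grp w).
- rewrite (commC (cev s) (cev t)); apply: gV; first exact: Mk_grp.
  apply: C => //; last by rewrite addnC.
  by have := wt_pos s; move=> ?; nlia.
- apply: C => //; by have := wt_pos t; move=> ?; nlia.
Qed.

Definition gens : gset := fun x => exists i, x = gen i.

Lemma gam_step k : 1 <= k -> subs (Gam k) (Mk k).
Proof.
elim: k => [//|[|k] IH] _.
  move=> x _; apply: (Span_min (Mk_grp 1) _ (gen_all x)) => y [i ->].
  by apply: SpS; left; exists (Leaf i).
apply: Commg_sub; first exact: Mk_grp.
move=> a b Ha _.
apply: (comm_span_norm (Mk_grp _) (@Mk_norm k.+2 isT) (S := fun x => Bas k.+1 x \/ Gam k.+2 x)
  (U := gens) _ (IH isT a Ha) (gen_all b)).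
move=> s t [[u [bu wu ->]]|Hs] [i ->].
  have -> : gen i = cev (Leaf i) by [].
  by apply: LL => //; rewrite wu addn1.
by apply: Gam_Mk; apply: Gam_comm.
Qed.

Definition Rng k N : gset := fun x =>
  (exists t, [/\ basic lt t, k <= wt t, wt t < N & x = cev t]) \/ Gam N x.

Lemma gam_range d k N : N = k + d -> 1 <= k -> subs (Gam k) (Span (Rng k N)).
Proof.
elim: d k => [|d IH] k HN k1 x Hx.
  by apply: SpS; right; rewrite HN addn0.
have := gam_step k1 Hx; apply: Span_min; first exact: Span_grp.
move=> y [[t [bt wt_ ->]]|Hy].
  by apply: SpS; left; exists t; split => //; [rewrite wt_| rewrite wt_ HN; nlia].
have := IH k.+1 ltac:(by rewrite HN addSnnS) isT y Hy.
apply: Span_mono => z [[t [bt w1 w2 ->]]|Hz]; last by right.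
by left; exists t; split => //; exact: ltnW.
Qed.

Lemma comm_in_l (H : gset) s t : Sgrp H -> Norm H -> H s -> H (comm s t).
Proof.
move=> HH HN Hs.
have -> : comm s t = inv s *g conj s t.
  exact: (@gid [:: s; t] (Tcomm (TV 0) (TV 1)) (TM (TI (TV 0)) (Tconj (TV 0) (TV 1))) (erefl true)).
apply: gM => //; [exact: gV| exact: HN].
Qed.
Lemma comm_in_r (H : gset) s t : Sgrp H -> Norm H -> H t -> H (comm s t).
Proof.
move=> HH HN Ht.
have -> : comm s t = conj (inv t) s *g t.
  exact: (@gid [:: s; t] (Tcomm (TV 0) (TV 1)) (TM (Tconj (TI (TV 1)) (TV 0)) (TV 1)) (erefl true)).
apply: gM => //; apply: HN; exact: gV.
Qed.

Definition SetMul (A B : gset) : gset := fun w => exists a b, [/\ A a, B b & w = a *g b].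

Section Main.
Variables c n : nat.
Hypotheses (n1 : 1 <= n) (c1 : 1 <= c) (cn : n - 1 <= c).
Definition NN := 2 * c + 2 * n + 2.
Ltac mlia := move: (n1) (c1) (cn) => ? ? ?; nlia.
Definition Wg : gset := fun w => exists b a,
    [/\ basic lt b, basic lt a & lt a b] /\
    [/\ c + n + 1 <= wt b, c + 1 <= wt a, wt b + wt a <= 2 * c + 2 * n + 1 &
        w = cev (Node b a)].

Lemma Rng_gam k N : 1 <= k -> k <= N -> subs (Span (Rng k N)) (Gam k).
Proof.
move=> k1 kN; apply: Span_min; first exact: Gam_grp.
move=> x [[t [bt w1 w2 ->]]|Hx]; first by apply: (Gam_mono w1); exact: cev_gam.
exact: Gam_mono Hx.
Qed.

Lemma main_sub : subs (Commg (Gam (c + n + 1)) (Gam (c + 1))) (Span (fun x => Wg x \/ Gam NN x)).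
Proof.
have MG := Span_grp (fun x => Wg x \/ Gam NN x).
have GN : subs (Gam NN) (Span (fun x => Wg x \/ Gam NN x)) by move=> x Hx; apply: SpS; right.
apply: Commg_sub => // a b Ha Hb.
have Ha' := gam_range (N := NN) (k := c + n + 1) (d := NN - (c + n + 1)) ltac:(by rewrite /NN; mlia) ltac:(by mlia) Ha.
have Hb' := gam_range (N := NN) (k := c + 1) (d := NN - (c + 1)) ltac:(by rewrite /NN; mlia) ltac:(by mlia) Hb.
apply: (comm_span MG _ _ Ha' Hb').
- move=> s t [[u [bu w1 w2 ->]]|Hs] [[v [bv w3 w4 ->]]|Ht];
    try (apply: GN; first [apply: comm_in_l; solve [exact: Gam_grp| exact: Gam_norm| done]
                          | apply: comm_in_r; solve [exact: Gam_grp| exact: Gam_norm| done]]).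
  case: (lt_total bu bv) => [->|[luv|lvu]].
  + by rewrite commxx; exact: g1.
  + rewrite (commC (cev v) (cev u)); apply: gV => //.
    have wvu := lt_wt bu bv luv.
    case: (leqP (wt v + wt u) (2 * c + 2 * n + 1)) => Hs.
      apply: SpS; left; exists v, u; split; split => //; mlia.
    apply: GN; apply: (@Gam_mono _ (wt v + wt u)); first by rewrite /NN; mlia.
    exact: (cev_gam (Node v u)).
  + case: (leqP (wt u + wt v) (2 * c + 2 * n + 1)) => Hs.
      by apply: SpS; left; exists u, v; split; split.
    apply: GN; apply: (@Gam_mono _ (wt u + wt v)); first by rewrite /NN; mlia.
    exact: (cev_gam (Node u v)).
- move=> g h z Hg Hh Hz Hgh.
  have Gg := @Rng_gam (c + n + 1) NN ltac:(by mlia) ltac:(by rewrite /NN; mlia) _ Hg.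
  have Gh := @Rng_gam (c + 1) NN ltac:(by mlia) ltac:(by rewrite /NN; mlia) _ Hh.
  have Gz : Gam (c + 1) z.
    case: Hz => Hz; last exact: (@Rng_gam (c + 1) NN ltac:(by mlia) ltac:(by rewrite /NN; mlia) _ Hz).
    apply: (@Gam_mono _ (c + n + 1)); first by mlia.
    exact: (@Rng_gam (c + n + 1) NN ltac:(by mlia) ltac:(by rewrite /NN; mlia) _ Hz).
  rewrite conjE; apply: gM => //; apply: GN.
  apply: (@Gam_mono _ ((c + n + 1) + (c + 1) + (c + 1))); first by rewrite /NN; mlia.
  apply: Gam_commg => //; try mlia.
  apply: Gam_commg => //; mlia.
Qed.

Lemma SetMul_grp (A B : gset) : Sgrp A -> Sgrp B -> Norm B -> Sgrp (SetMul A B).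
Proof.
move=> GA GB NB; split.
- by exists one, one; split; [exact: g1| exact: g1| rewrite mulg1].
- move=> x [a [b [Ha Hb ->]]]; exists (inv a), (conj (inv b) (inv a)); split.
  + exact: gV.
  + by apply: NB; exact: gV.
  + exact: (@gid [:: a; b] (TI (TM (TV 0) (TV 1))) (TM (TI (TV 0)) (Tconj (TI (TV 1)) (TI (TV 0)))) (erefl true)).
- move=> x y [a [b [Ha Hb ->]]] [a' [b' [Ha' Hb' ->]]].
  exists (a *g a'), (conj b a' *g b'); split.
  + exact: gM.
  + by apply: gM => //; exact: NB.
  + exact: (@gid [:: a; b; a'; b'] (TM (TM (TV 0) (TV 1)) (TM (TV 2) (TV 3)))
       (TM (TM (TV 0) (TV 2)) (TM (Tconj (TV 1) (TV 2)) (TV 3))) (erefl true)).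
Qed.

Theorem abs_main w :
  SetMul (Commg (Gam (c + n + 1)) (Gam (c + 1))) (Gam NN) w <->
  SetMul (Span Wg) (Gam NN) w.
Proof.
split.
- move=> [a [b [Ha Hb ->]]].
  have := main_sub Ha.
  have : subs (Span (fun x => Wg x \/ Gam NN x)) (SetMul (Span Wg) (Gam NN)).
    apply: Span_min; first by apply: SetMul_grp; [exact: Span_grp| exact: Gam_grp| exact: Gam_norm].
    move=> x [Hx|Hx].
      by exists x, one; split; [exact: SpS| exact: g1 (Gam_grp _)| rewrite mulg1].
    by exists one, x; split; [exact: Sp1| done| rewrite mul1g].
  move=> H /H [a1 [n1' [Ha1 Hn1 ->]]].
  exists a1, (n1' *g b); split; [done| by apply: gM => //; exact: Gam_grp| by rewrite mulA].
- move=> [a [b [Ha Hb ->]]]; exists a, b; split => //.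
  move: Ha; apply: Span_min; first exact: Span_grp.
  move=> x [bb [aa [[bb1 ba1 lab] [w1 w2 w3 ->]]]].
  apply: SpS; exists (cev bb), (cev aa); split => //.
  + by apply: (Gam_mono w1); exact: cev_gam.
  + by apply: (Gam_mono w2); exact: cev_gam.
Qed.
End Main.
End Hall.
End Grp.
Section FreeModel.
Variable m : nat.
Local Notation word := (word m).
Local Notation letter := (letter m).

Definition rnc (a b : letter) : bool := ~~ ((b.1 == a.1) && (b.2 != a.2)).
Definition redw (w : word) : bool := sorted rnc w.

Lemma redw_tail l w : redw (l :: w) -> redw w.
Proof. exact: path_sorted. Qed.

Lemma push_red l w : redw w -> redw (push l w).
Proof.
case: w => [//|l' w] /= H; case: ifP => [_|/negbT Hc]; first exact: path_sorted H.
by rewrite /redw /= {1}/rnc Hc.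
Qed.

Lemma reduce_red (w : word) : redw (reduce w).
Proof. by elim: w => //= l w IH; exact: push_red. Qed.

Lemma reduce_id w : redw w -> reduce w = w.
Proof.
elim: w => //= l w IH Hw; rewrite IH; last exact: redw_tail Hw.
case: w Hw {IH} => //= l' w /andP [H _]; by rewrite (negbTE H).
Qed.

Definition linv (l : letter) : letter := (l.1, ~~ l.2).

Lemma push_inv l w : redw w -> push l (push (linv l) w) = w.
Proof.
case: l => i b; case: w => [|[j b'] w] Hw; first by rewrite /= eqxx; case: b.
rewrite /linv /=; case: (j =P i) => [Eji|Nji] /=; last by rewrite eqxx; case: b.
subst j; case: b b' Hw => [] [] //= Hw; rewrite ?eqxx //=;
  case: w Hw => //= l w /andP [H _]; move: H; rewrite /rnc /= => /negbTE -> //.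
Qed.

Definition act (u : word) (r : word) : word := foldr (@push m) r u.

Lemma act_red u r : redw r -> redw (act u r).
Proof. by elim: u => //= l u IH Hr; apply: push_red; exact: IH. Qed.

Lemma act_push l x r : redw x -> redw r -> act (push l x) r = push l (act x r).
Proof.
case: x => [//|l' x] /= Hx Hr; case: ifP => // /andP [/eqP E1 E2].
have -> : l' = linv l.
  by move: E1 E2; case: (l) => i b; case: (l') => j b' /= -> ; case: b; case: b'.
by rewrite push_inv //; apply: act_red.
Qed.

Lemma act_reduce u r : redw r -> act (reduce u) r = act u r.
Proof.
move=> Hr; elim: u => //= l u IH.
by rewrite act_push ?IH //; exact: reduce_red.
Qed.

Lemma reduce_act (u : word) : reduce u = act u [::].
Proof. by []. Qed.

Lemma fgmul_act (u v : word) : fgmul u v = act u (reduce v).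
Proof. by rewrite /fgmul /reduce foldr_cat. Qed.

Lemma fgmul_red (u v : word) : redw (fgmul u v).
Proof. exact: reduce_red. Qed.

Lemma fgmulA (u v w : word) : fgmul (fgmul u v) w = fgmul u (fgmul v w).
Proof.
rewrite [LHS]fgmul_act {1}/fgmul act_reduce; last exact: reduce_red.
rewrite [RHS]fgmul_act (reduce_id (fgmul_red v w)) fgmul_act.
by rewrite /act foldr_cat.
Qed.

Lemma fginv_act (u r : word) : redw r -> act (fginv u) (act u r) = r.
Proof.
elim: u r => //= l u IH r Hr.
rewrite /fginv map_cons rev_cons -cats1 /act foldr_cat /=.
have -> : (l.1, ~~ l.2) = linv l by [].
have H2 : redw (act u r) by exact: act_red.
have -> : push (linv l) (push l (act u r)) = act u r.
  by rewrite -{2}(push_inv (linv l) H2); case: l {H2} => i b; rewrite /linv /= negbK.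
exact: IH.
Qed.

Lemma fginvK (u : word) : fginv (fginv u) = u.
Proof.
rewrite /fginv map_rev revK -map_comp -[RHS]map_id; apply: eq_map => -[i b] /=.
by rewrite negbK.
Qed.

Lemma fginv_red (u : word) : redw u -> redw (fginv u).
Proof.
rewrite /redw /fginv rev_sorted sorted_map => H.
apply: sub_sorted H => a b; rewrite /rnc /= eq_sym; by case: a.2; case: b.2.
Qed.

Definition FG := {w : word | redw w}.
Definition gmul (a b : FG) : FG := exist _ (fgmul (val a) (val b)) (fgmul_red _ _).
Definition ginv (a : FG) : FG := exist _ (fginv (val a)) (fginv_red (valP a)).
Definition gone : FG := exist _ [::] isT.

Lemma gmulA x y z : gmul x (gmul y z) = gmul (gmul x y) z.
Proof. by apply: val_inj; rewrite /= fgmulA. Qed.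
Lemma gmul1 x : gmul gone x = x.
Proof. by apply: val_inj; rewrite /= /fgmul /= reduce_id //; exact: valP. Qed.
Lemma gmulg1 x : gmul x gone = x.
Proof. by apply: val_inj; rewrite /= /fgmul cats0 reduce_id //; exact: valP. Qed.
Lemma gmulV x : gmul (ginv x) x = gone.
Proof.
apply: val_inj; have Hy := reduce_id (valP x).
rewrite /= fgmul_act Hy -[X in act _ X]Hy reduce_act fginv_act //.
Qed.
Lemma gmulgV x : gmul x (ginv x) = gone.
Proof.
apply: val_inj; have Hy := reduce_id (fginv_red (valP x)).
rewrite /= fgmul_act Hy -[X in act _ X]Hy reduce_act.
by have := @fginv_act (fginv (val x)) [::] isT; rewrite fginvK.
Qed.
End FreeModel.

Section Tr.
Variable m : nat.
Local Notation G := (FG m).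
Local Notation gm := (@gmul m).
Local Notation gi := (@ginv m).
Local Notation g1 := (gone m).
Local Notation GSpan := (Span gm gi g1).
Local Notation GGam := (Gam gm gi g1).

Definition ggen (i : 'I_m) : G := exist _ (fggen i) isT.

Lemma fgspan_red (S : fgset m) w : fgspan S w -> redw w.
Proof.
elim => //; [move=> s _; exact: reduce_red| move=> u _; exact: fginv_red|
  move=> u v _ _ _ _; exact: fgmul_red].
Qed.

Definition img (S : fgset m) : G -> Prop := fun g => exists s, S s /\ reduce s = val g.

Lemma span_tr (S : fgset m) (g : G) : fgspan S (val g) <-> GSpan (img S) g.
Proof.
split.
- move=> H.
  suff : forall w, fgspan S w -> forall Hw : redw w, GSpan (img S) (exist _ w Hw).
    have E : exist (fun w => redw w) (val g) (valP g) = g by apply: val_inj.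
    by move/(_ _ H (valP g)); rewrite E.
  move=> w; elim => [|s Hs|u Hu IH|u v Hu IHu Hv IHv] Hw.
  + have -> : exist _ [::] Hw = g1 by apply: val_inj.
    exact: Sp1.
  + by apply: SpS; exists s.
  + have -> : exist _ (fginv u) Hw = gi (exist _ u (fgspan_red Hu)) by apply: val_inj.
    apply: SpV; exact: IH.
  + have -> : exist _ (fgmul u v) Hw =
       gm (exist _ u (fgspan_red Hu)) (exist _ v (fgspan_red Hv)) by apply: val_inj.
    by apply: SpM; [exact: IHu| exact: IHv].
- elim => [|h [s [Hs <-]]|u _ IH|u v _ IHu _ IHv] /=.
  + exact: span1.
  + exact: spanS.
  + exact: spanV.
  + exact: spanM.
Qed.

Lemma commg_tr (A B : fgset m) (AG BG : G -> Prop) :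
 (forall w, A w -> redw w) -> (forall w, B w -> redw w) ->
 (forall g : G, A (val g) <-> AG g) -> (forall g : G, B (val g) <-> BG g) ->
 forall g : G, fgcommg A B (val g) <-> Commg gm gi g1 AG BG g.
Proof.
move=> rA rB eA eB g; rewrite /fgcommg span_tr /Commg.
split; apply: Span_mono => x.
- case=> s [[a [b [Ha Hb ->]]] Hr].
  exists (exist _ a (rA _ Ha)), (exist _ b (rB _ Hb)); split; [apply/eA| apply/eB|] => //.
  by apply: val_inj; rewrite -Hr reduce_id //; exact: fgmul_red.
- case=> a [b [Ha Hb ->]].
  exists (val (comm gm gi a b)); split; last exact: reduce_id (valP _).
  by exists (val a), (val b); split; [apply/eA| apply/eB|].
Qed.

Lemma gamma_red k (w : word m) : gamma k w -> redw w.
Proof. by case: k => [|[|k]] /fgspan_red. Qed.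

Lemma Ftot_tr (g : G) : Ftot (val g) <-> True.
Proof.
split => // _; apply/span_tr; apply: SpS; exists (val g); split => //.
exact: reduce_id (valP g).
Qed.

Lemma gamma_tr k (g : G) : gamma k (val g) <-> GGam k g.
Proof.
elim: k g => [|[|k] IH] g; try exact: Ftot_tr.
apply: commg_tr; [move=> w; exact: (@gamma_red k.+1 w)| move=> w; exact: fgspan_red| exact: IH| exact: Ftot_tr].
Qed.

Lemma setmul_tr (A B : fgset m) (AG BG : G -> Prop) :
 (forall w, A w -> redw w) -> (forall w, B w -> redw w) ->
 (forall g : G, A (val g) <-> AG g) -> (forall g : G, B (val g) <-> BG g) ->
 forall w, fgsetmul A B w <-> exists g : G, val g = w /\ SetMul gm AG BG g.
Proof.
move=> rA rB eA eB w; split.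
- case=> a [b [Ha Hb ->]].
  exists (gm (exist _ a (rA _ Ha)) (exist _ b (rB _ Hb))); split => //.
  by exists (exist _ a (rA _ Ha)), (exist _ b (rB _ Hb)); split; [apply/eA| apply/eB|].
- case=> g [<- [a [b [Ha Hb ->]]]].
  by exists (val a), (val b); split; [apply/eA| apply/eB|].
Qed.

Lemma cev_val t : val (cev gm gi ggen t) = ceval t.
Proof. by elim: t => //= b -> a ->. Qed.

Lemma wset_tr lt c n (g : G) : fgspan (Wset lt c n) (val g) <-> GSpan (Wg gm gi ggen lt c n) g.
Proof.
rewrite span_tr; split; apply: Span_mono => x.
- case=> s [[b [a [H1 [w1 w2 w3 ->]]]] Hr].
  exists b, a; split => //; split => //.
  apply: val_inj; rewrite -Hr cev_val reduce_id //; exact: fgmul_red.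
- case=> b [a [H1 [w1 w2 w3 ->]]].
  exists (ceval (Node b a)); split; first by exists b, a; split => //; split.
  by rewrite -cev_val; exact: reduce_id (valP _).
Qed.

Lemma ggen_all g : GSpan (fun x => exists i, x = ggen i) g.
Proof.
case: g => w; elim: w => [|l w IH] Hw.
  have -> : exist _ [::] Hw = g1 by apply: val_inj.
  exact: Sp1.
have Hw' : redw w := path_sorted Hw.
case: l Hw => i b Hw.
have [L [HL HLv]] : exists L, GSpan (fun x => exists i, x = ggen i) L /\ val L = [:: (i, b)].
  case: b {Hw}; [exists (gi (ggen i))| exists (ggen i)]; split => //.
    by apply: SpV; apply: SpS; exists i.
  by apply: SpS; exists i.
have -> : exist _ ((i, b) :: w) Hw = gm L (exist _ w Hw').
  apply: val_inj; rewrite /= /fgmul HLv.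
  by rewrite cat1s reduce_id.
by apply: SpM => //; exact: IH.
Qed.
End Tr.

Theorem lemma2p5 (m : nat) (lt : ctree m -> ctree m -> Prop) (n c : nat) :
  (1 <= n)%N -> (1 <= c)%N -> (n - 1 <= c)%N ->
  basic_order lt ->
  fgset_eq
    (fgsetmul (fgcommg (@gamma m (c + n + 1)) (@gamma m (c + 1))) (@gamma m (2 * c + 2 * n + 2)))
    (fgsetmul (fgspan (Wset lt c n)) (@gamma m (2 * c + 2 * n + 2))).
Proof.
move=> n1 c1 cn Hlt w.
rewrite (setmul_tr (AG := Commg (@gmul m) (@ginv m) (gone m)
                      (Gam (@gmul m) (@ginv m) (gone m) (c + n + 1))
                      (Gam (@gmul m) (@ginv m) (gone m) (c + 1)))
                   (BG := Gam (@gmul m) (@ginv m) (gone m) (2 * c + 2 * n + 2))).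
- rewrite (setmul_tr (AG := Span (@gmul m) (@ginv m) (gone m) (Wg (@gmul m) (@ginv m) (@ggen m) lt c n))
                   (BG := Gam (@gmul m) (@ginv m) (gone m) (2 * c + 2 * n + 2))).
  + have AM := abs_main (@gmulA m) (@gmul1 m) (@gmulg1 m) (@gmulV m) (@gmulgV m)
         (@ggen_all m) Hlt n1 c1 cn.
    split=> -[g [<- H]]; exists g; split => //.
      exact: ((AM g).1 H).
    exact: ((AM g).2 H).
  + exact: fgspan_red.
  + exact: gamma_red.
  + exact: wset_tr.
  + exact: gamma_tr.
- exact: fgspan_red.
- exact: gamma_red.
- apply: commg_tr; [exact: gamma_red| exact: gamma_red| exact: gamma_tr| exact: gamma_tr].
- exact: gamma_tr.
Qed.
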